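(* Let $n\ge 3$ and let $O$ be an optimal acyclic matching on the $(n-2)$-skeleton $\Delta^n_{(n-2)}$ of $\Delta^n$. Let $U$ be the set of critical $(n-2)$-dimensional simplices of $O$. Let $F_0,\dots,F_n$ be the $(n-1)$-dimensional simplices of $\Delta^n$, and let $K_{n+1}$ be the complete graph on the vertex set $\{F_0,\dots,F_n\}$. Identify each $(n-2)$-simplex $u$ of $\Delta^n$ with the edge $\{F_i,F_j\}$ of $K_{n+1}$, where $F_i,F_j$ are the two $(n-1)$-simplices of $\Delta^n$ containing $u$ (this is a bijection between $(n-2)$-simplices of $\Delta^n$ and edges of $K_{n+1}$). Then $|U|=n$ and, under this identification, $U$ is the edge set of a spanning tree of $K_{n+1}$.
   Context: All simplicial complexes are finite abstract simplicial complexes; simplices are nonempty. $\Delta^n$ is the simplicial complex of all nonempty subsets of an $(n+1)$-element vertex set; $\Delta^n_{(k)}$ denotes its $k$-skeleton (simplices of dimension $\le k$). The Hasse diagram $\mathcal{H}(K)$ of $K$ is the directed graph whose vertices are the simplices of $K$, with an edge $\sigma\to\tau$ whenever $\sigma\subsetneq\tau$ and $\dim\tau=\dim\sigma+1$. A matching on $\mathcal{H}(K)$ is a set $W$ of edges of $\mathcal{H}(K)$, no two sharing a vertex; an edge $\sigma\to\tau$ in $W$ is called a pair $(\sigma,\tau)$, and a simplex lying in no pair is called critical. $W$ is acyclic if the directed graph obtained from $\mathcal{H}(K)$ by reversing every edge in $W$ has no directed cycle. An acyclic matching is optimal if it minimizes the total number of critical simplices among all acyclic matchings on $K$. *)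

(* Defs.v *)
From mathcomp Require Import all_boot.
Set Implicit Arguments. Unset Strict Implicit. Unset Printing Implicit Defensive.

(* Abstract simplicial complexes on a finite vertex type T are represented as
   families K : {set {set T}} of nonempty vertex sets; dim s = #|s| - 1. *)
Section Defs.
Variable T : finType.
Implicit Types (K : {set {set T}}) (s t : {set T}).

Definition simplex : {set {set T}} := [set s : {set T} | s != set0].

Definition skeleton K (k : nat) : {set {set T}} :=
  [set s in K | #|s| <= k.+1].

Definition hasse K s t : bool :=
  [&& s \in K, t \in K, s \proper t & #|t| == #|s|.+1].

Definition is_matching K (W : {set {set T} * {set T}}) : Prop :=
  (forall p, p \in W -> hasse K p.1 p.2) /\
  (forall p q, p \in W -> q \in W -> p != q ->
     [set p.1; p.2] :&: [set q.1; q.2] = set0).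

Definition mod_edge K (W : {set {set T} * {set T}}) : rel {set T} :=
  fun s t => (hasse K s t && ((s, t) \notin W)) || (hasse K t s && ((t, s) \in W)).

Definition acyclic_matching K (W : {set {set T} * {set T}}) : Prop :=
  is_matching K W /\
  (forall s t, mod_edge K W s t -> ~~ connect (mod_edge K W) t s).

Definition critical K (W : {set {set T} * {set T}}) : {set {set T}} :=
  [set s in K | [forall p in W, (p.1 != s) && (p.2 != s)]].

Definition optimal_acyclic_matching K (W : {set {set T} * {set T}}) : Prop :=
  acyclic_matching K W /\
  (forall W', acyclic_matching K W' -> #|critical K W| <= #|critical K W'|).
End Defs.

(* Simple undirected graphs on a vertex set Vs : {set V}, with edge set
   E : {set {set V}} consisting of 2-element subsets. *)
Section Graphs.
Variable V : finType.

Definition gadj (E : {set {set V}}) : rel V :=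
  fun x y => (x != y) && ([set x; y] \in E).

Definition is_spanning_tree (Vs : {set V}) (E : {set {set V}}) : Prop :=
  (forall e, e \in E -> e \subset Vs /\ #|e| = 2) /\
  (forall x y, x \in Vs -> y \in Vs -> connect (gadj E) x y) /\
  ~ (exists c : seq V, 2 < size c /\ ucycle (gadj E) c).
End Graphs.

(* The (n-1)-simplices F_i of Delta^n, and the edge {F_i,F_j} associated to an
   (n-2)-simplex u: the set of (n-1)-simplices containing u. *)
Definition facets (n : nat) : {set {set 'I_n.+1}} :=
  [set F in simplex 'I_n.+1 | #|F| == n].

Definition edge_of (n : nat) (u : {set 'I_n.+1}) : {set {set 'I_n.+1}} :=
  [set F in facets n | u \subset F].

(* Main.v *)
Require Import Defs.
From mathcomp Require Import all_boot zify.
Set Implicit Arguments. Unset Strict Implicit. Unset Printing Implicit Defensive.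

Lemma cyc_back (X : finType) (e : rel X) (A : {set X}) x0 :
  x0 \in A ->
  (forall x, x \in A -> exists y s t,
      [/\ y \in A, e s t, connect e y s & connect e t x]) ->
  exists s t, e s t /\ connect e t s.
Proof.
move=> Ax0 H.
pose f := fun x => #|[set z | connect e z x]|.
case: (@arg_minnP _ x0 (mem A) f Ax0) => x Ax minx.
have [y [s [t [Ay est cys ctx]]]] := H x Ax.
have sub : [set z | connect e z y] \subset [set z | connect e z x].
  apply/subsetP => z; rewrite !inE => czy.
  apply: connect_trans czy (connect_trans cys _).
  exact: connect_trans (connect1 est) ctx.
have := subset_leqif_cards sub; case=> _ eqc.
have : [set z | connect e z y] == [set z | connect e z x].
  by rewrite -eqc eqn_leq minx // (subset_leq_card sub).
move/eqP=> E.
have : x \in [set z | connect e z y] by rewrite E inE connect0.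
rewrite inE => cxy.
exists s, t; split => //.
exact: connect_trans ctx (connect_trans cxy cys).
Qed.

Lemma cyc_fwd (X : finType) (e : rel X) (A : {set X}) x0 :
  x0 \in A ->
  (forall x, x \in A -> exists y s t,
      [/\ y \in A, e s t, connect e x s & connect e t y]) ->
  exists s t, e s t /\ connect e t s.
Proof.
move=> Ax0 H.
pose f := fun x => #|[set z | connect e x z]|.
case: (@arg_minnP _ x0 (mem A) f Ax0) => x Ax minx.
have [y [s [t [Ay est cxs cty]]]] := H x Ax.
have sub : [set z | connect e y z] \subset [set z | connect e x z].
  apply/subsetP => z; rewrite !inE => czy.
  apply: connect_trans cxs (connect_trans (connect1 est) _).
  exact: connect_trans cty czy.
have := subset_leqif_cards sub; case=> _ eqc.
have : [set z | connect e y z] == [set z | connect e x z].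
  by rewrite -eqc eqn_leq minx // (subset_leq_card sub).
move/eqP=> E.
have : x \in [set z | connect e y z] by rewrite E inE connect0.
rewrite inE => cyx.
exists s, t; split => //.
exact: connect_trans cty (connect_trans cyx cxs).
Qed.


Lemma cross (X:finType) (e:rel X) (A:{set X}) x y :
  connect e x y -> x \in A -> y \notin A ->
  exists a b, [/\ a \in A, b \notin A & e a b].
Proof.
case/connectP=> p; elim: p x => [|z p IH] x /=.
  by move=> _ -> ->.
case/andP=> exz pz ly xA yA.
case: (boolP (z \in A)) => zA; first exact: IH pz ly zA yA.
by exists x, z.
Qed.

Lemma grow (V : finType) (Vs : {set V}) (E : {set {set V}}) r d :
  (forall y, y \in Vs -> connect (gadj E) r y) ->
  forall m (A : {set V}) (E' : {set {set V}}), #|~: A| <= m -> r \in A ->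
  E' \subset E -> (forall e, e \in E' -> e \subset A) ->
  #|A| <= #|E'| + d -> #|Vs| <= #|E| + d.
Proof.
move=> conn; elim=> [|m IH] A E' hm rA sE eA cA;
  (case: (boolP (Vs \subset A)) => VA;
   [apply: leq_trans (subset_leq_card VA) _;
    apply: leq_trans cA _; rewrite leq_add2r; exact: subset_leq_card|]).
  have : ~: A == set0 by rewrite -cards_eq0 -leqn0.
  move/eqP/setP=> H; case/subsetPn: VA => y _; move: (H y).
  by rewrite !inE => ->.
case/subsetPn: VA => y yV yA.
have [a [b [aA bA /andP [ab abE]]]] := cross (conn y yV) rA yA.
have nE' : [set a; b] \notin E'.
  apply/negP => /eA /subsetP /(_ b); rewrite !inE eqxx orbT => /(_ isT).
  by rewrite (negbTE bA).
apply: (IH (b |: A) ([set a; b] |: E')).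
- rewrite cardsCs setCK cardsU1 bA /=; move: hm; rewrite cardsCs setCK.
  move: #|V| #|A| => p q; lia.

- by rewrite inE rA orbT.
- by apply/subsetP => z; rewrite in_setU1 => /orP [/eqP -> //| /(subsetP sE)].
- move=> z; rewrite in_setU1 => /orP [/eqP -> | /eA zA].
    by apply/subsetP => w; rewrite !inE => /orP [/eqP -> | ->]; rewrite ?aA ?orbT.
  by apply: subset_trans zA _; exact: subsetUr.
- by rewrite !cardsU1 bA nE' /= addSn ltnS.
Qed.
Lemma next2 (X : eqType) (c : seq X) x :
  uniq c -> 2 < size c -> x \in c -> next c (next c x) != x.
Proof.
move=> uc sc xc; case: (rot_to xc) => i s' E.
rewrite -!(next_rot i uc) E.
have uc' : uniq (x :: s') by rewrite -E rot_uniq.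
have sc' : 2 < size (x :: s') by rewrite -E size_rot.
case: s' uc' sc' {E} => [|y [|z t]] //= uc' _.
rewrite eqxx /=.
move: uc'; rewrite !inE !negb_or => /and3P [/and3P [xy xz xt] /andP [yz yt] _].
by rewrite [y == x]eq_sym (negbTE xy) eqxx eq_sym.
Qed.

Lemma tree_of (V : finType) (Vs : {set V}) (E : {set {set V}}) r :
  r \in Vs -> (forall e, e \in E -> e \subset Vs) ->
  (forall x y, x \in Vs -> y \in Vs -> connect (gadj E) x y) ->
  #|E|.+1 <= #|Vs| ->
  #|E|.+1 = #|Vs| /\ ~ (exists c : seq V, 2 < size c /\ ucycle (gadj E) c).
Proof.
move=> rV EV conn cE; split.
  apply/eqP; rewrite eqn_leq cE /= -addn1.
  apply: (@grow _ Vs E r 1 (fun y yV => conn r y rV yV) _ [set r] set0) => //.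
  - by rewrite set11.
  - exact: sub0set.
  - by move=> e; rewrite inE.
  - by rewrite cards1 cards0.
case=> c [sc /andP [cc uc]].
case: c sc cc uc => [|c0 c'] // sc cc uc.
have c0c : c0 \in c0 :: c' by rewrite mem_head.
have e0 := next_cycle cc c0c.
have c0V : c0 \in Vs.
  move: e0 => /andP [_ /EV /subsetP]; apply; exact: set21.
have := @grow _ Vs E c0 0 (fun y yV => conn c0 y c0V yV) #|~: [set x in c0 :: c']|
  [set x in c0 :: c'] [set [set x; next (c0 :: c') x] | x in c0 :: c'] (leqnn _).
move=> H.
suff : #|Vs| <= #|E| + 0 by rewrite addn0 leqNgt cE.
apply: H.
- by rewrite inE.
- apply/subsetP => e /imsetP [x xc ->].
  by case/andP: (next_cycle cc xc).
- move=> e /imsetP [x xc ->]; apply/subsetP => z; rewrite !inE.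
  by case/orP => /eqP ->; rewrite -in_cons ?mem_next xc.
- rewrite addn0 card_in_imset; first by rewrite cardsE.
  move=> x y xc yc Exy; apply/eqP; apply: contraT => nxy.
  have xin : x \in [set y; next (c0 :: c') y] by rewrite -Exy set21.
  have yin : y \in [set x; next (c0 :: c') x] by rewrite Exy set21.
  move: xin yin; rewrite !inE [y == x]eq_sym (negbTE nxy) !orFb => /eqP ex /eqP ey.
  by have := next2 uc sc xc; rewrite -ey -ex eqxx.
Qed.


Lemma path_mono (X : finType) (e : rel X) (f : X -> nat) :
  (forall x y, e x y -> f x < f y) -> forall x y, connect e x y -> f x <= f y.
Proof.
move=> H x y /connectP [p]; elim: p x => [|z p IH] x /=; first by move=> _ ->.
case/andP=> exz pz ly; apply: leq_trans (ltnW (H _ _ exz)) (IH _ pz ly).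
Qed.

Lemma inK n (s : {set 'I_n.+1}) :
  (s \in skeleton (simplex 'I_n.+1) (n-2)) = (s != set0) && (#|s| <= (n-2).+1).
Proof. by rewrite !inE. Qed.

Definition W0 n : {set {set 'I_n.+1} * {set 'I_n.+1}} :=
  [set p | [&& p.1 \in skeleton (simplex 'I_n.+1) (n-2),
               p.2 \in skeleton (simplex 'I_n.+1) (n-2),
               ord0 \notin p.1 & p.2 == ord0 |: p.1]].

Lemma W0_acyclic n : acyclic_matching (skeleton (simplex 'I_n.+1) (n-2)) (W0 n).
Proof.
set K := skeleton _ _.
split; first split.
- case=> s t; rewrite inE /= => /and4P [sK tK s0 /eqP tE]; subst t.
  by rewrite /hasse sK tK /= properEcard subsetUr cardsU1 s0 /= ltnSn eqxx.
- case=> a a' [b b']; rewrite !inE /= => /and4P[_ _ a0 /eqP ea'] /and4P[_ _ b0 /eqP eb'] neq.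
  subst a' b'.
  have ab : a != b by apply: contraNneq neq => ->.
  apply/setP => z; rewrite !inE; apply/negbTE/negP.
  case/andP => /orP [/eqP za | /eqP za] /orP [/eqP zb | /eqP zb]; rewrite za in zb.
  + by rewrite zb eqxx in ab.
  + by move: a0; rewrite zb setU11.
  + by move: b0; rewrite -zb setU11.
  + by move: ab; rewrite -(setU1K a0) zb (setU1K b0) eqxx.
- pose psi := fun x : {set 'I_n.+1} => #|x| + 2 * (ord0 \notin x).
  have mono : forall x y, mod_edge K (W0 n) x y -> psi x < psi y.
    move=> x y; rewrite /mod_edge => /orP [/andP [hxy nW] | /andP [hyx yW]].
      move: hxy => /and4P [xK yK pxy /eqP cy].
      case: (boolP (ord0 \in x)) => x0.
        have y0 : ord0 \in y by apply: (subsetP (proper_sub pxy)).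
        by rewrite /psi x0 y0 cy /= !addn0.
      case: (boolP (ord0 \in y)) => y0.
        exfalso; move/negP: nW; apply; rewrite inE /= xK yK x0 /= eq_sym eqEcard.
        rewrite cardsU1 x0 cy /= leqnn andbT subUset sub1set y0 /=.
        exact: proper_sub pxy.
      by rewrite /psi x0 y0 cy /= addSn.
    move: yW; rewrite inE /= => /and4P [_ _ y0 /eqP ->].
    by rewrite /psi cardsU1 y0 setU11 /= addn0 add1n addn2.
  move=> s t est; apply/negP => cts.
  by have := path_mono mono cts; rewrite leqNgt mono.
Qed.

Lemma crit_W0 n : 3 <= n ->
  #|critical (skeleton (simplex 'I_n.+1) (n-2)) (W0 n)| <= n.+1.
Proof.
move=> hn; set K := skeleton _ _.
set B := [set [set~ ord0] :\ j | j in [set~ (@ord0 n)]].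
have sub : critical K (W0 n) \subset [set [set ord0]] :|: B.
  apply/subsetP => s; rewrite inE => /andP [sK /forall_inP Hc].
  have sK' := sK; rewrite inK in sK'; case/andP: sK' => sne ss.
  case: (boolP (ord0 \in s)) => s0.
    case: (boolP (s :\ ord0 == set0)) => [/eqP e | ne].
      by rewrite -(setD1K s0) e setU0 !inE eqxx.
    suff : (s :\ ord0, s) \in W0 n by move/Hc; rewrite eqxx andbF.
    rewrite inE /= inK ne sK setD11 /= (setD1K s0) eqxx andbT.
    by apply: leq_trans ss; apply: subset_leq_card; apply: subsetDl.
  case: (ltnP #|s| (n-2).+1) => sl.
    suff : (s, ord0 |: s) \in W0 n by move/Hc; rewrite eqxx.
    rewrite inE /= sK s0 eqxx inK cardsU1 s0 /= add1n sl andbT.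
    by rewrite andbT; apply/set0Pn; exists ord0; rewrite setU11.
  have cs : #|s| = n.-1 by lia.
  have c2 : #|~: s| = 2 by rewrite cardsCs setCK card_ord; lia.
  have c1 : #|~: s :\ ord0| == 1.
    by move: c2; rewrite (cardsD1 ord0) inE s0 /= add1n => [[->]].
  case/cards1P: c1 => j e.
  have jin : j \in ~: s :\ ord0 by rewrite e set11.
  move: jin; rewrite !inE => /andP [j0 js].
  apply/orP; right; apply/imsetP; exists j; first by rewrite !inE.
  apply/setP => z; move/setP: e => /(_ z); rewrite !inE.
  case: (eqVneq z ord0) => [-> | zn0] /=; first by rewrite andbF (negbTE s0).
  by rewrite andbT => <-; rewrite negbK.
apply: leq_trans (subset_leq_card sub) _.
apply: leq_trans (leq_card_setU _ _).1 _.
rewrite cards1 add1n ltnS.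
apply: leq_trans (leq_imset_card _ _) _.
by rewrite cardsC1 card_ord.
Qed.


Lemma sub_setC1 (T : finType) (u : {set T}) i : (u \subset [set~ i]) = (i \notin u).
Proof.
apply/subsetP/idP => [H | iu z zu].
  by apply/negP => /H; rewrite !inE eqxx.
by rewrite !inE; apply: contraNneq iu => <-.
Qed.

Lemma setC1_inj' (T : finType) : injective (fun i : T => [set~ i]).
Proof.
move=> i j /= e; have : i \notin [set~ j] by rewrite -e !inE eqxx.
by rewrite !inE negbK => /eqP.
Qed.

Lemma facetsE n (F : {set 'I_n.+1}) :
  0 < n -> (F \in facets n) = (F \in [set [set~ i] | i : 'I_n.+1]).
Proof.
move=> n0; apply/idP/imsetP => [| [i _ ->]].
  rewrite !inE => /andP [_ /eqP cF].
  have : #|~: F| == 1 by rewrite cardsCs setCK card_ord cF; apply/eqP; lia.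
  by case/cards1P => i e; exists i => //; rewrite -e setCK.
by rewrite !inE -card_gt0 cardsC1 card_ord /= n0 eqxx.
Qed.

Lemma card_facets n : 0 < n -> #|facets n| = n.+1.
Proof.
move=> n0; have -> : facets n = [set [set~ i] | i : 'I_n.+1].
  by apply/setP => F; rewrite facetsE.
by rewrite card_imset ?cardsT ?card_ord //; exact: setC1_inj'.
Qed.

Lemma edge_ofE n (u : {set 'I_n.+1}) :
  0 < n -> edge_of u = [set [set~ i] | i in ~: u].
Proof.
move=> n0; apply/setP => F; rewrite inE facetsE //.
apply/andP/imsetP => [[/imsetP [i _ ->] ui] | [i iu ->]].
  by exists i => //; rewrite inE -sub_setC1.
by split; [apply/imsetP; exists i | rewrite sub_setC1 -in_setC].
Qed.

Lemma card_edge_of n (u : {set 'I_n.+1}) :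
  2 <= n -> #|u| = n.-1 -> #|edge_of u| = 2.
Proof.
move=> n2 cu; rewrite edge_ofE; last by lia.
rewrite card_imset; last exact: setC1_inj'.
rewrite cardsCs setCK card_ord cu; lia.
Qed.

Lemma edge_of_pair n (u F G : {set 'I_n.+1}) :
  2 <= n -> #|u| = n.-1 -> F \in facets n -> G \in facets n -> F != G ->
  u \subset F -> u \subset G -> edge_of u = [set F; G].
Proof.
move=> n2 cu Ff Gf FG uF uG; apply/eqP; rewrite eq_sym eqEcard card_edge_of //.
rewrite cards2 FG andbT; apply/subsetP => z; rewrite in_set2 /edge_of inE.
by case/orP => /eqP ->; rewrite ?Ff ?Gf ?uF ?uG.
Qed.


Lemma match_share (T:finType) K (W : {set {set T} * {set T}}) p q z :
  is_matching K W -> p \in W -> q \in W ->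
  z \in [set p.1; p.2] -> z \in [set q.1; q.2] -> p = q.
Proof.
case=> _ H pW qW zp zq; apply/eqP; apply: contraT => pq.
by have := H p q pW qW pq; move/setP/(_ z); rewrite inE zp zq inE.
Qed.

Lemma crit_vertex n (O : {set {set 'I_n.+1} * {set 'I_n.+1}}) : 3 <= n ->
  acyclic_matching (skeleton (simplex 'I_n.+1) (n-2)) O ->
  exists v, [set v] \in critical (skeleton (simplex 'I_n.+1) (n-2)) O.
Proof.
move=> hn [[Hh Hm] Hac]; set K := skeleton _ _.
case: (boolP [exists v, [set v] \in critical K O]) => [/existsP // | nc].
exfalso.
set A := [set s in K | #|s| == 1].
have x0A : [set ord0] \in A.
  by rewrite inE inK cards1 /= andbT -card_gt0 cards1.
have [s [t [est cts]]] : exists s t, mod_edge K O s t /\ connect (mod_edge K O) t s.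
  apply: (cyc_back x0A) => x; rewrite inE => /andP [xK /cards1P [v xv]].
  have : ~~ [forall p in O, (p.1 != x) && (p.2 != x)].
    move/existsPn: nc => /(_ v); rewrite inE -xv xK /=; exact.
  case/forall_inPn => p pO; rewrite negb_and !negbK => /orP [/eqP p1 | /eqP p2]; last first.
    have := Hh p pO; rewrite /hasse => /and4P [p1K _ _ /eqP c].
    move: c; rewrite p2 xv cards1 => [[/esym/eqP]]; rewrite cards_eq0 => /eqP e.
    by move: p1K; rewrite e inK eqxx.
  have := Hh p pO; rewrite /hasse p1 => /and4P [_ tK pxt /eqP ct].
  set t := p.2 in tK pxt ct.
  have xt := proper_sub pxt.
  set y := t :\: x.
  have cy : #|y| = 1.
    by rewrite cardsD (setIidPr xt) ct xv cards1.
  have yK : y \in K.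
    by rewrite inK cy -card_gt0 cy /=; lia.
  have yt : y \subset t by exact: subsetDl.
  have pyt : y \proper t by rewrite properEcard yt ct cy xv cards1.
  have xy : x != y.
    apply/negP => /eqP e; move: cy; rewrite -e => cx.
    have : x :&: y = set0 by apply/setP => z; rewrite /y !inE; case: (z \in x) => //; rewrite andbF.
    by rewrite -e setIid => e0; move: cx; rewrite e0 cards0.
  exists y, y, t; split => //.
  - by rewrite inE yK cy.
  - rewrite /mod_edge /hasse yK tK pyt ct cy xv cards1 eqxx /=.
    apply/orP; left; apply/negP => ytO.
    have := match_share (conj Hh Hm) pO ytO (z := t).
    rewrite !inE eqxx !orbT => /(_ isT isT) => e.
    by move: xy; rewrite -p1 e eqxx.
  - apply: connect1; rewrite /mod_edge; apply/orP; right.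
    rewrite /hasse xK tK pxt ct eqxx /=.
    by rewrite -p1 -surjective_pairing.
by move: (Hac s t est); rewrite cts.
Qed.


Lemma cut_crit n (O : {set {set 'I_n.+1} * {set 'I_n.+1}}) (S : {set {set 'I_n.+1}}) (F G : {set 'I_n.+1}) : 3 <= n ->
  acyclic_matching (skeleton (simplex 'I_n.+1) (n-2)) O ->
  F \in facets n -> F \in S -> G \in facets n -> G \notin S ->
  exists u, [/\ u \in critical (skeleton (simplex 'I_n.+1) (n-2)) O, #|u| = n.-1 &
    exists F', exists G', [/\ F' \in facets n, F' \in S, G' \in facets n, G' \notin S &
                             (u \subset F') && (u \subset G')]].
Proof.
move=> hn [[Hh Hm] Hac] Ff FS Gf GS; set K := skeleton _ _.
set C := [set u in K | (#|u| == n.-1) && [exists F', [exists G',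
   [&& F' \in facets n, F' \in S, G' \in facets n, G' \notin S, u \subset F' & u \subset G']]]].
case: (boolP [exists u in C, u \in critical K O]) => [/exists_inP [u uC uc] | nc].
  move: uC; rewrite inE => /and3P [_ /eqP cu /existsP [F' /existsP [G' /and5P [F'f F'S G'f G'S /andP [uF uG]]]]].
  exists u; split => //; exists F', G'; split => //; by rewrite uF uG.
exfalso.
have cfac : forall Z, Z \in facets n -> #|Z| = n by move=> Z; rewrite !inE => /andP [_ /eqP].
have x0C : F :&: G \in C.
  have FG : F != G by apply: contraNneq GS => <-.
  have cFG : #|F :&: G| = n.-1.
    have := cardsUI F G; rewrite (cfac F Ff) (cfac G Gf).
    have : #|F :|: G| <= n.+1 by apply: leq_trans (max_card _) _; rewrite card_ord.
    have : #|F :&: G| < n.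
      suff : #|F :&: G| < #|F| by rewrite (cfac F Ff).
      rewrite ltn_neqAle (subset_leq_card (subsetIl F G)) andbT.
      apply: contra FG => /eqP e.
      have FG' : F :&: G == F by rewrite eqEcard subsetIl e leqnn.
      have sFG : F \subset G by apply/setIidPl; exact/eqP.
      by rewrite eqEcard sFG (cfac F Ff) (cfac G Gf) /=.
    move: #|F :&: G| #|F :|: G| => a b; lia.
  rewrite inE inK -card_gt0 cFG eqxx /=; apply/andP; split.
    by apply/andP; split; clear -hn; lia.
  apply/existsP; exists F; apply/existsP; exists G.
  by rewrite Ff FS Gf GS subsetIl subsetIr.
have [s [t [est cts]]] : exists s t, mod_edge K O s t /\ connect (mod_edge K O) t s.
  apply: (cyc_fwd x0C) => x xC.
  have xnc : x \notin critical K O by move/exists_inPn: nc => /(_ x xC).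
  move: xC; rewrite inE => /and3P [xK /eqP cx /existsP [F' /existsP [G' /and5P [F'f F'S G'f G'S /andP [xF xG]]]]].
  have : ~~ [forall p in O, (p.1 != x) && (p.2 != x)] by move: xnc; rewrite inE xK.
  case/forall_inPn => p pO; rewrite negb_and !negbK => /orP [/eqP p1 | /eqP p2].
    have := Hh p pO; rewrite /hasse p1 => /and4P [_ p2K _ /eqP c].
    exfalso; move: p2K; rewrite inK c cx => /andP [_] h; clear -h hn; lia.
  have := Hh p pO; rewrite /hasse p2 => /and4P [sK _ psx /eqP csx].
  set sg := p.1 in sK psx csx.
  have pE : p = (sg, x) by rewrite -p2 -surjective_pairing.
  case/properP: psx => sx [a ax asg].
  set H := [set~ a].
  have Hf : H \in facets n.
    rewrite !inE -card_gt0 cardsC1 card_ord /=; apply/andP; split; [clear -hn; lia | exact/eqP].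
  have gen : forall Z, Z \in facets n -> x \subset Z ->
      [/\ Z :\ a \in K, #|Z :\ a| = n.-1, sg \subset Z :\ a, a \notin Z :\ a & Z :\ a \subset H].
    move=> Z Zf xZ; have aZ : a \in Z by exact: (subsetP xZ).
    have cZ : #|Z :\ a| = n.-1 by move: (cardsD1 a Z); rewrite aZ (cfac Z Zf) => /= e; clear -e hn; lia.
    split => //.
    - by rewrite inK -card_gt0 cZ; apply/andP; split; clear -hn; lia.
    - apply/subsetP => z zs; rewrite !inE (subsetP xZ _ (subsetP sx _ zs)) andbT.
      by apply: contraNneq asg => <-.
    - by rewrite !inE eqxx.
    - by apply/subsetP => z; rewrite !inE => /andP [].
  have [y [yK cy sy ay yC]] : exists y, [/\ y \in K, #|y| = n.-1, sg \subset y, a \notin y & y \in C].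
    case: (boolP (H \in S)) => HS.
      have [? ? ? ? ?] := gen G' G'f xG.
      exists (G' :\ a); split => //; rewrite inE; apply/and3P; split => //; first exact/eqP.
      apply/existsP; exists H; apply/existsP; exists G'.
      by rewrite Hf HS G'f G'S /=; apply/andP; split => //; exact: subD1set.
    have [? ? ? ? ?] := gen F' F'f xF.
    exists (F' :\ a); split => //; rewrite inE; apply/and3P; split => //; first exact/eqP.
    apply/existsP; exists F'; apply/existsP; exists H.
    by rewrite F'f F'S Hf HS /=; apply/andP; split => //; exact: subD1set.
  exists y, x, sg; split => //.
  - rewrite /mod_edge; apply/orP; right.
    by rewrite /hasse sK xK properEcard sx csx ltnSn eqxx /= -pE.
  - apply: connect1; rewrite /mod_edge; apply/orP; left.
    rewrite /hasse sK yK properEcard sy cy /=.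
    have csg : #|sg| = n.-2 by clear -csx cy cx hn; lia.
    rewrite csg; apply/andP; split; first by apply/andP; split; [clear -hn; lia| apply/eqP; clear -hn; lia].
    apply/negP => syO.
    have := match_share (conj Hh Hm) pO syO (z := sg).
    rewrite pE !inE eqxx /= => /(_ isT isT) [e].
    by move: ax; rewrite e (negbTE ay).
by move: (Hac s t est); rewrite cts.
Qed.


Theorem mainTheorem3 (n : nat) (hn : 3 <= n)
  (O : {set {set 'I_n.+1} * {set 'I_n.+1}}) :
  optimal_acyclic_matching (skeleton (simplex 'I_n.+1) (n - 2)) O ->
  let U := [set u in critical (skeleton (simplex 'I_n.+1) (n - 2)) O
              | #|u| == n.-1] in
  #|U| = n /\ is_spanning_tree (facets n) [set edge_of u | u in U].
Proof.
case=> Oac Oopt U.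
have n0 : 0 < n by clear -hn; lia.
have n2 : 2 <= n by clear -hn; lia.
have cO : #|critical (skeleton (simplex 'I_n.+1) (n - 2)) O| <= n.+1 := leq_trans (Oopt _ (W0_acyclic n)) (crit_W0 hn).
have [v vc] := crit_vertex hn Oac.
have cU : #|U| <= n.
  have sub : U \proper critical (skeleton (simplex 'I_n.+1) (n - 2)) O.
    apply/properP; split; first by apply/subsetP => u; rewrite inE => /andP [].
    exists [set v] => //; rewrite inE cards1 negb_and vc /= eq_sym.
    apply/eqP => h; clear -h hn; lia.
  by rewrite -ltnS; apply: leq_trans (proper_card sub) cO.
set E := [set edge_of u | u in U].
have EV : forall e, e \in E -> e \subset facets n /\ #|e| = 2.
  move=> e /imsetP [u uU ->]; split.
    by apply/subsetP => F; rewrite inE => /andP [].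
  by apply: card_edge_of => //; move: uU; rewrite inE => /andP [_ /eqP].
have conn : forall x y, x \in facets n -> y \in facets n -> connect (gadj E) x y.
  move=> x y xf yf; apply: contraT => nxy.
  pose S := [set F | connect (gadj E) x F].
  have xS : x \in S by rewrite inE connect0.
  have yS : y \notin S by rewrite inE.
  have [u [uc cu [F' [G' [F'f F'S G'f G'S /andP [uF uG]]]]]] := cut_crit hn Oac xf xS yf yS.
  have uU : u \in U by rewrite inE uc cu eqxx.
  have FG : F' != G' by apply: contraNneq G'S => <-.
  have eu := edge_of_pair n2 cu F'f G'f FG uF uG.
  have g : gadj E F' G' by rewrite /gadj FG -eu; apply/imsetP; exists u.
  move: G'S; rewrite inE; move: F'S; rewrite inE => cF.
  by rewrite (connect_trans cF (connect1 g)).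
have rf : [set~ (@ord0 n)] \in facets n by rewrite facetsE //; apply/imsetP; exists ord0.
have cE : #|E| <= #|U| by exact: leq_imset_card.
have cEf : #|E|.+1 <= #|facets n| by rewrite card_facets // ltnS; exact: leq_trans cE cU.
have [h1 h2] := tree_of rf (fun e he => (EV e he).1) conn cEf.
split; last by split.
move: h1; rewrite card_facets // => [[h1]].
by apply/eqP; rewrite eqn_leq cU /= -{1}h1.
Qed.
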